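(* Let $f\in\mathbb{Q}[x_1,\dots,x_n]$ be a convex polynomial and $P=\{x\in\mathbb{R}^n:Ax\le b\}$ a nonempty polyhedron ($A\in\mathbb{Q}^{m\times n}$, $b\in\mathbb{Q}^m$). Suppose $\mathcal{U}\subseteq\mathbb{R}^n$ is a linear subspace, $U\in\mathbb{Q}^{k\times n}$ has pairwise orthogonal rows spanning $\mathcal{U}$, $w\in\mathcal{U}^\perp$ is a rational vector, and $q\in\mathbb{Q}[y_1,\dots,y_k]$ is a strongly convex quadratic polynomial, such that $f(x)=f(x_{\mathcal{U}})-\langle w,x\rangle$ and $f(x_{\mathcal{U}})\ge q(Ux)$ for all $x\in\mathbb{R}^n$. Then $f$ is unbounded from below on $P$ if and only if there exists $x^0\in\mathbb{R}^n$ with $Ax^0\le0$, $Ux^0=0$ (equivalently $x^0\in\mathcal{U}^\perp$) and $\langle w,x^0\rangle=1$.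
   Context: $x_{\mathcal{U}}$ denotes the orthogonal projection of $x$ onto $\mathcal{U}$. A quadratic $q$ is strongly convex if its (constant) Hessian is positive definite. Such $\mathcal{U},U,w,q$ always exist for convex rational $f$. *)

(* Defs.v *)
From HB Require Import structures.
From mathcomp Require Import all_boot all_order all_algebra.
From mathcomp Require Import reals.
From mathcomp Require Import mpoly.
Set Implicit Arguments. Unset Strict Implicit. Unset Printing Implicit Defensive.
Import Order.TTheory GRing.Theory Num.Theory.
Local Open Scope ring_scope.

(* Vectors of R^n are column vectors 'cV[R]_n; variable x_i <-> x i 0. *)

Definition peval (R : realType) (n : nat) (p : {mpoly rat[n]}) (x : 'cV[R]_n) : R :=
  (map_mpoly (ratr : rat -> R) p).@[fun i => x i 0].

Definition ratmx (R : realType) (m n : nat) (A : 'M[rat]_(m, n)) : 'M[R]_(m, n) :=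
  map_mx (ratr : rat -> R) A.

Definition dotv (R : realType) (n : nat) (u v : 'cV[R]_n) : R :=
  \sum_(i < n) u i 0 * v i 0.

Definition lev (R : realType) (m : nat) (u v : 'cV[R]_m) : Prop :=
  forall i, u i 0 <= v i 0.

Definition convex_poly (R : realType) (n : nat) (p : {mpoly rat[n]}) : Prop :=
  forall (x y : 'cV[R]_n) (t : R), 0 <= t <= 1 ->
    peval p (t *: x + (1 - t) *: y) <= t * peval p x + (1 - t) * peval p y.

Definition hessian (R : realType) (k : nat) (q : {mpoly rat[k]}) (y : 'cV[R]_k)
  : 'M[R]_k :=
  \matrix_(i, j) peval ((q^`M(i))^`M(j)) y.

(* q is a quadratic polynomial (total degree <= 2) whose constant Hessian is
   positive definite. *)
Definition strongly_convex_quadratic (R : realType) (k : nat) (q : {mpoly rat[k]}) : Prop :=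
  (msize q <= 3)%N /\
  forall y0 y : 'cV[R]_k, y != 0 -> 0 < (y^T *m hessian q y0 *m y) 0 0.

(* The orthogonal projection x_U of x onto the subspace spanned by the rows of B
   (as row vectors): projection onto <<B>> along its orthogonal complement
   kermx B^T = { v | v *m B^T = 0 }. *)
Definition orth_proj (R : realType) (k n : nat) (B : 'M[R]_(k, n)) (x : 'cV[R]_n)
  : 'cV[R]_n :=
  (x^T *m proj_mx (<<B>>)%MS (kermx B^T))^T.

(* Main.v *)
Require Import Defs.
From HB Require Import structures.
From mathcomp Require Import all_boot all_order all_algebra.
From mathcomp Require Import reals.
From mathcomp Require Import mpoly.
From mathcomp.algebra_tactics Require Import ring lra.
From Stdlib Require List.
Import Order.TTheory GRing.Theory Num.Theory.
Local Open Scope ring_scope.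
Section FM.
Variable R : realFieldType.
Definition Cn := ((nat -> R) * R)%type.
Definition dotn (n : nat) (a x : nat -> R) : R := \sum_(i < n) a i * x i.

Inductive incone (n : nat) (S : seq Cn) : (nat -> R) -> R -> Prop :=
| IC_mem a d : List.In (a, d) S -> incone n S a d
| IC_add a1 d1 a2 d2 : incone n S a1 d1 -> incone n S a2 d2 ->
    incone n S (fun i => a1 i + a2 i) (d1 + d2)
| IC_scale l a d : 0 <= l -> incone n S a d -> incone n S (fun i => l * a i) (l * d)
| IC_weak a d e : incone n S a d -> d <= e -> incone n S a e
| IC_ext a a' d : incone n S a d -> (forall i, (i < n)%N -> a i = a' i) ->
    incone n S a' d.

Lemma sep (T1 T2 : Type) (L : seq T1) (Us : seq T2) (lf : T1 -> R) (uf : T2 -> R) :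
 (forall l u, List.In l L -> List.In u Us -> lf l <= uf u) ->
 exists t, (forall l, List.In l L -> lf l <= t) /\ (forall u, List.In u Us -> t <= uf u).
Proof.
elim: L => [|l L IH] H.
- have [t Ht] : exists t, forall u, List.In u Us -> t <= uf u.
    elim: Us {H} => [|u Us [t Ht]]; first by exists 0.
    exists (Num.min (uf u) t) => v /= [<-|Hv]; rewrite ge_min ?lexx //.
    by rewrite Ht ?orbT.
  by exists t; split=> // l [].
- have [t [H1 H2]] := IH (fun l' u Hl Hu => H l' u (or_intror Hl) Hu).
  exists (Num.max (lf l) t); split.
  + by move=> l' /= [<-|Hl]; rewrite le_max ?lexx // H1 ?orbT.
  + by move=> u Hu; rewrite ge_max (H l u (or_introl erefl) Hu) H2.
Qed.

Lemma split_sign (S : seq Cn) :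
  (forall c, List.In c S -> 0 <= c.2) \/ exists c, List.In c S /\ c.2 < 0.
Proof.
elim: S => [|c S [H|[c' [H1 H2]]]]; first by left => c [].
- case: (leP 0 c.2) => h.
  + by left => c0 /= [<-|]; [done | exact: H].
  + by right; exists c; split => //; left.
- by right; exists c'; split => //; right.
Qed.

Definition comb (n : nat) (p q : Cn) : Cn :=
  (fun i => (- q.1 n) * p.1 i + p.1 n * q.1 i, (- q.1 n) * p.2 + p.1 n * q.2).

Definition elim_sys n (S : seq Cn) : seq Cn :=
 List.app (List.filter (fun c => c.1 n == 0) S)
   (List.flat_map (fun p => List.map (comb n p) (List.filter (fun c => c.1 n < 0) S))
      (List.filter (fun c => 0 < c.1 n) S)).

Lemma transfer n S a d : incone n (elim_sys n S) a d ->
  exists a', (forall i, (i < n)%N -> a' i = a i) /\ a' n = 0 /\ incone n.+1 S a' d.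
Proof.
elim=> {a d}.
- move=> a d /List.in_app_iff [/List.filter_In [Hin /eqP H0] |
     /List.in_flat_map [[pa pd] [/List.filter_In [Hp Pp]
        /List.in_map_iff [[qa qd] [Hc /List.filter_In [Hq Nq]]]]]].
  + by exists a; split=> //; split=> //; exact: IC_mem.
  + move: Hc; rewrite /comb /= => -[<- <-].
    exists (fun i => - qa n * pa i + pa n * qa i); split=> //; split.
      by rewrite /=; ring.
    apply: IC_add; apply: IC_scale; (try by apply: IC_mem).
      by rewrite oppr_ge0 ltW.
    by rewrite ltW.
- move=> a1 d1 a2 d2 _ [a1' [h1 [h1n H1]]] _ [a2' [h2 [h2n H2]]].
  exists (fun i => a1' i + a2' i); split; first by move=> i hi; rewrite h1 ?h2.
  by split; [rewrite h1n h2n addr0 | exact: IC_add].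
- move=> l a d hl _ [a' [h1 [h1n H1]]].
  exists (fun i => l * a' i); split; first by move=> i hi; rewrite h1.
  by split; [rewrite h1n mulr0 | exact: IC_scale].
- move=> a d e _ [a' [h1 [h1n H1]]] hde.
  by exists a'; split=> //; split=> //; apply: IC_weak H1 hde.
- move=> a a'' d _ [a' [h [hn H]]] he; exists a'; split=> // i hi.
  by rewrite h // he.
Qed.

Arguments transfer [n S a d].

Lemma dotn_comb n (p q x : nat -> R) al be :
  dotn n (fun i => al * p i + be * q i) x = al * dotn n p x + be * dotn n q x.
Proof.
rewrite /dotn !mulr_sumr -big_split /=; apply: eq_bigr => i _; ring.
Qed.

Theorem fm n : forall S : seq Cn,
  (exists x : nat -> R, forall c, List.In c S -> dotn n c.1 x <= c.2) \/
  incone n S (fun _ => 0) (-1).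
Proof.
elim: n => [|n IH] S.
- case: (split_sign S) => [H|[[a d] [Hin Hd]]].
  + by left; exists (fun _ => 0) => c Hc; rewrite /dotn big_ord0; exact: H.
  + right; apply: (@IC_ext _ _ (fun i => (-d)^-1 * a i)) => //.
    apply: (@IC_weak _ _ _ ((-d)^-1 * d)).
      apply: IC_scale; last exact: IC_mem.
      by rewrite invr_ge0 oppr_ge0 ltW.
    have hd : d != 0 by rewrite lt_eqF.
    rewrite le_eqVlt; apply/orP; left; apply/eqP; field.
    by [].
- case: (IH (elim_sys n S)) => [[x' Hx']|Hc]; last first.
    right; have [a' [h1 [h2 H]]] := transfer Hc.
    apply: IC_ext H _ => i; rewrite ltnS leq_eqVlt => /orP [/eqP ->|hi].
      by [].
    by rewrite h1.
  left.
  have hsep : forall q p, List.In q (List.filter (fun c => c.1 n < 0) S) ->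
     List.In p (List.filter (fun c => 0 < c.1 n) S) ->
     (q.2 - dotn n q.1 x') / q.1 n <= (p.2 - dotn n p.1 x') / p.1 n.
    move=> q p Hq Hp.
move: Hq Hp => /List.filter_In [Hq Nq] /List.filter_In [Hp Pp].
  have := Hx' (comb n p q).
  have hin : List.In (comb n p q) (elim_sys n S).
    apply/List.in_app_iff; right; apply/List.in_flat_map; exists p; split.
      by apply/List.filter_In.
    by apply/List.in_map_iff; exists q; split => //; apply/List.filter_In.
  move=> /(_ hin); rewrite /comb /= dotn_comb => H.
  rewrite -subr_ge0.
  have hq : q.1 n != 0 by rewrite lt_eqF.
  have hp : p.1 n != 0 by rewrite gt_eqF.
  have -> : (p.2 - dotn n p.1 x') / p.1 n - (q.2 - dotn n q.1 x') / q.1 n =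
     ((- q.1 n) * (p.2 - dotn n p.1 x') + p.1 n * (q.2 - dotn n q.1 x')) / (p.1 n * (- q.1 n)).
    by field; rewrite hp hq.
  apply: divr_ge0; first lra.
  nra.
  have [t [Ht1 Ht2]] := @sep _ _ (List.filter (fun c => c.1 n < 0) S)
     (List.filter (fun c => 0 < c.1 n) S)
     (fun c => (c.2 - dotn n c.1 x') / c.1 n) (fun c => (c.2 - dotn n c.1 x') / c.1 n) hsep.
exists (fun i => if i == n then t else x' i).
  move=> [a d] Hin /=. rewrite /dotn big_ord_recr /= eqxx.
  have -> : \sum_(i < n) a (widen_ord (leqnSn n) i) *
       (if widen_ord (leqnSn n) i == n :> nat then t else x' (widen_ord (leqnSn n) i))
       = dotn n a x'.
    by apply: eq_bigr => i _; rewrite /= (ltn_eqF (ltn_ord i)).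
  case: (ltrgtP (a n) 0) => h.
  * have := Ht1 (a, d) (proj2 (List.filter_In _ _ _) (conj Hin h)).
    rewrite /=; set r := (_ / _) => hr.
    have e : a n * r = d - dotn n a x'.
      rewrite /r; field; by rewrite lt_eqF.
    nra.
  * have := Ht2 (a, d) (proj2 (List.filter_In _ _ _) (conj Hin h)).
    rewrite /=; set r := (_ / _) => hr.
    have e : a n * r = d - dotn n a x'.
      rewrite /r; field; by rewrite gt_eqF.
    nra.
  * rewrite h mul0r addr0; apply: (Hx' (a, d)).
    apply/List.in_app_iff; left; apply/List.filter_In; split => //.
    by rewrite /= h eqxx.
Qed.
End FM.
Arguments dotn {R}.
Arguments incone {R}.
Arguments fm {R}.
Section Tay.
Variable R : realType.
Variable k : nat.
Implicit Types (p : {mpoly rat[k]}) (x : 'cV[R]_k).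

Lemma pevalD p p' x : peval (p + p') x = peval p x + peval p' x.
Proof. by rewrite /peval raddfD /= mevalD. Qed.
Lemma peval0 x : peval (0 : {mpoly rat[k]}) x = 0.
Proof. by rewrite /peval raddf0 meval0. Qed.
Lemma pevalZ c p x : peval (c *: p) x = ratr c * peval p x.
Proof. by rewrite /peval map_mpolyZ mevalZ. Qed.
Lemma pevalM p p' x : peval (p * p') x = peval p x * peval p' x.
Proof. by rewrite /peval rmorphM /= mevalM. Qed.
Lemma pevalC c x : peval c%:MP x = ratr c.
Proof. by rewrite /peval map_mpolyC mevalC. Qed.
Lemma pevalX i x : peval 'X_i x = x i 0.
Proof. by rewrite /peval map_mpolyX mevalXU. Qed.

Lemma dX (a i : 'I_k) : ('X_a : {mpoly rat[k]})^`M(i) = ((a == i)%:R)%:MP.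
Proof.
rewrite mderivX mnm1E; case: eqP => [<-|_].
  have -> : (U_(a) - U_(a))%MM = 0%MM.
    by apply/mnmP => j; rewrite mnmBE subnn mnm0E.
  by rewrite mpolyX0 scale1r mpolyC1.
by rewrite scale0r mpolyC0.
Qed.

Definition tay p x : R :=
  peval p 0 + \sum_(i < k) peval (p^`M(i)) 0 * x i 0 +
  2^-1 * \sum_(i < k) \sum_(j < k) peval (p^`M(i)^`M(j)) 0 * (x i 0 * x j 0).

Lemma tayD p p' x : tay (p + p') x = tay p x + tay p' x.
Proof.
rewrite /tay pevalD.
under eq_bigr do rewrite mderivD pevalD mulrDl.
under [X in _ + 2^-1 * X]eq_bigr do under eq_bigr do rewrite !mderivD pevalD mulrDl.
rewrite big_split /=.
under [X in _ + 2^-1 * X]eq_bigr do rewrite big_split /=.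
rewrite big_split /=; ring.
Qed.

Lemma tay0 x : tay 0 x = 0.
Proof.
rewrite /tay peval0 big1 ?big1 => [|i _|i _]; first by rewrite mulr0 !addr0.
  by rewrite big1 // => j _; rewrite !mderiv0 peval0 mul0r.
by rewrite mderiv0 peval0 mul0r.
Qed.

Lemma tayZ c p x : tay (c *: p) x = ratr c * tay p x.
Proof.
rewrite /tay pevalZ.
under eq_bigr do rewrite mderivZ pevalZ -mulrA.
under [X in _ + 2^-1 * X]eq_bigr do under eq_bigr do rewrite !mderivZ pevalZ -mulrA.
rewrite -mulr_sumr.
under [X in _ + 2^-1 * X]eq_bigr do rewrite -mulr_sumr.
rewrite -mulr_sumr; ring.
Qed.

Lemma sum_ind (F : 'I_k -> R) a : \sum_(i < k) (a == i)%:R * F i = F a.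
Proof.
rewrite (bigD1 a) //= eqxx mul1r big1 ?addr0 // => i /negbTE.
by rewrite eq_sym => ->; rewrite mul0r.
Qed.

Lemma tay_mono (m : 'X_{1..k}) x : (mdeg m <= 2)%N -> peval 'X_[m] x = tay 'X_[m] x.
Proof.
rewrite leq_eqVlt ltnS leq_eqVlt ltnS leqn0 orbA.
case/orP; last first.
  rewrite mdeg_eq0 => /eqP ->; rewrite mpolyX0 -mpolyC1 /tay !pevalC.
  rewrite [X in _ + 2^-1 * X]big1 ?mulr0 ?addr0; last first.
    by move=> i _; rewrite big1 // => j _; rewrite !mderivC peval0 mul0r.
  by rewrite big1 ?addr0 // => i _; rewrite mderivC peval0 mul0r.
case/orP => hm; last first.
  case/mdeg1P: hm => a /eqP ->.
  rewrite /tay pevalX.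
  under eq_bigr do rewrite dX pevalC rmorph_nat.
  under [X in _ + 2^-1 * X]eq_bigr do under eq_bigr do rewrite dX mderivC peval0 mul0r.
  rewrite sum_ind big1 ?mulr0 ?addr0; last by move=> i _; rewrite big1.
  by rewrite pevalX mxE add0r.
have [a ha] : exists a, (0 < m a)%N.
  case: (pickP (fun i => (0 < m i)%N)) => [a ha|h]; first by exists a.
  exfalso; move: hm; rewrite mdegE big1 // => i _.
  by have := h i; rewrite /= lt0n => /negbFE /eqP.
have hle : (U_(a) <= m)%MM.
  by apply/mnm_lepP => i; rewrite mnm1E; case: eqP => // <-.
have := submK hle; set m' := (m - U_(a))%MM => em.
have : mdeg m' = 1%N.
  by move: hm; rewrite -em mdegD mdeg1 addn1 => /eqP [].
move/eqP/mdeg1P => [b /eqP eb].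
rewrite -em eb mpolyXD.
have D1 : forall i, ('X_[U_(b)] * 'X_[U_(a)] : {mpoly rat[k]})^`M(i) =
   ((b == i)%:R)%:MP * 'X_a + 'X_b * ((a == i)%:R)%:MP.
  by move=> i; rewrite mderivM !dX.
rewrite /tay pevalM !pevalX.
under eq_bigr do rewrite D1 pevalD !pevalM !pevalX !mxE !mulr0 !mul0r addr0 mul0r.
under [X in _ + 2^-1 * X]eq_bigr do under eq_bigr do
  rewrite D1 mderivD !mderivM !mderivC !dX !mul0r !mulr0 add0r addr0
    pevalD !pevalM !pevalC !rmorph_nat.
rewrite big1 // addr0.
under eq_bigr => i _ do under eq_bigr => j _ do rewrite mulrDl -!mulrA [X in _ + X]mulrCA.
under eq_bigr => i _ do rewrite big_split /= -!mulr_sumr !sum_ind.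
rewrite big_split /= !sum_ind pevalM !pevalX !mxE mul0r add0r.
by field.
Qed.


Lemma taylor p x : (msize p <= 3)%N -> peval p x = tay p x.
Proof.
move=> hs; rewrite (mpolyE p).
have : forall m, m \in msupp p -> (mdeg m <= 2)%N.
  by move=> m hm; have := msize_mdeg_lt hm; move/leq_trans/(_ hs).
elim: (msupp p) => [|m s IH] H.
  by rewrite big_nil peval0 tay0.
rewrite big_cons pevalD tayD pevalZ tayZ tay_mono; last by apply: H; rewrite mem_head.
by rewrite IH // => m' hm'; apply: H; rewrite in_cons hm' orbT.
Qed.
End Tay.
Lemma trmx11 (R : ringType) (A : 'M[R]_1) : A^T 0 0 = A 0 0.
Proof. by rewrite mxE. Qed.

Lemma psd_lb (R : realFieldType) k (H : 'M[R]_k) (h : 'cV[R]_k) :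
  H^T = H -> (forall y : 'cV[R]_k, y != 0 -> 0 < (y^T *m H *m y) 0 0) ->
  exists C, forall u : 'cV[R]_k, C <= (h^T *m u) 0 0 + 2^-1 * (u^T *m H *m u) 0 0.
Proof.
move=> HT PD.
have Hu : H \in unitmx.
  rewrite -row_free_unit -kermx_eq0; apply/eqP/row_matrixP => i; rewrite row0.
  set r := row i (kermx H).
  have hr : r *m H = 0 by rewrite /r -row_mul mulmx_ker row0.
  apply/eqP; apply: contraT => hr0.
  have : r^T != 0 by rewrite -(inj_eq (@trmx_inj _ _ _)) trmxK trmx0.
  move/PD; rewrite trmxK hr mul0mx mxE ltxx //.
set Hi := invmx H.
exists (- 2^-1 * (h^T *m Hi *m h) 0 0) => u.
set v := u + Hi *m h.
have e1 : v^T *m H *m v = u^T *m H *m u + u^T *m h + h^T *m u + h^T *m Hi *m h.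
  have -> : v^T = u^T + (Hi *m h)^T by apply/matrixP=> i j; rewrite !mxE.
  rewrite /v trmx_mul trmx_inv HT -/Hi !mulmxDl !mulmxDr -!mulmxA.
  rewrite /Hi !mulKVmx // !mulKmx //.
  by rewrite !addrA; congr (_ + _); rewrite -!addrA; congr (_ + _); rewrite addrC.
have e2 : (u^T *m h) 0 0 = (h^T *m u) 0 0.
  by rewrite -trmx11 trmx_mul trmxK.
have hpos : 0 <= (v^T *m H *m v) 0 0.
  case: (eqVneq v 0) => [->|hv]; first by rewrite mulmx0 mxE.
  exact/ltW/PD.
move: hpos; rewrite e1 !mxE.
rewrite !mxE in e2.
lra.
Qed.
Lemma quad_lb (R : realType) k (q : {mpoly rat[k]}) :
  strongly_convex_quadratic R q -> forall z : 'cV[R]_k,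
  exists C, forall u : 'cV[R]_k, C <= peval q u - \sum_(i < k) z i 0 * u i 0.
Proof.
move=> [hs PD] z.
set H := hessian q (0 : 'cV[R]_k).
have HT : H^T = H by apply/matrixP => i j; rewrite !mxE mderiv_comm.
set g : 'cV[R]_k := \col_i (peval (q^`M(i)) (0:'cV[R]_k)).
have [C HC] := @psd_lb _ _ H (g - z) HT (PD 0).
exists (peval q 0 + C) => u.
rewrite (@taylor R k q u hs) /tay.
have E1 : ((g - z)^T *m u) 0 0 =
    \sum_i peval (q^`M(i)) 0 * u i 0 - \sum_i z i 0 * u i 0.
  rewrite mxE -sumrB; apply: eq_bigr => i _; rewrite !mxE; ring.
have E2 : (u^T *m H *m u) 0 0 =
    \sum_i \sum_j peval (q^`M(i)^`M(j)) 0 * (u i 0 * u j 0).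
  rewrite mxE; under eq_bigr do rewrite mxE big_distrl /=.
  rewrite exchange_big; apply: eq_bigr => i _; apply: eq_bigr => j _.
  rewrite !mxE; ring.
have := HC u; rewrite E1 E2.

lra.
Qed.
Lemma sum_indG (R : pzRingType) p (F : 'I_p -> R) a : \sum_(i < p) (a == i)%:R * F i = F a.
Proof.
rewrite (bigD1 a) //= eqxx mul1r big1 ?addr0 // => i /negbTE.
by rewrite eq_sym => ->; rewrite mul0r.
Qed.

Section Main.
Variable R : realType.

Definition nf p (v : 'I_p -> R) : nat -> R :=
  fun j => if insub j is Some l then v l else 0.
Arguments nf [p].

Lemma nfE p (v : 'I_p -> R) (l : 'I_p) : nf v l = v l.
Proof. by rewrite /nf valK. Qed.

Lemma dotn_nf p (a b : 'I_p -> R) : dotn p (nf a) (nf b) = \sum_(l < p) a l * b l.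
Proof. by apply: eq_bigr => l _; rewrite !nfE. Qed.

Lemma dotnD p (a1 a2 x : nat -> R) :
  dotn p (fun i => a1 i + a2 i) x = dotn p a1 x + dotn p a2 x.
Proof. by rewrite /dotn -big_split; apply: eq_bigr => i _; rewrite mulrDl. Qed.

Lemma dotnZ p l (a x : nat -> R) : dotn p (fun i => l * a i) x = l * dotn p a x.
Proof. by rewrite /dotn mulr_sumr; apply: eq_bigr => i _; rewrite mulrA. Qed.

Lemma dotvDZ n (w x y : 'cV[R]_n) t : dotv w (x + t *: y) = dotv w x + t * dotv w y.
Proof.
rewrite /dotv mulr_sumr -big_split /=; apply: eq_bigr => i _; rewrite !mxE; ring.
Qed.

Lemma dotvZ n (w y : 'cV[R]_n) t : dotv w (t *: y) = t * dotv w y.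
Proof.
rewrite /dotv mulr_sumr; apply: eq_bigr => i _; rewrite !mxE; ring.
Qed.

Lemma In_of_in (T : eqType) (x : T) (s : seq T) : x \in s -> List.In x s.
Proof.
elim: s => [|y s IH] //=; rewrite in_cons => /orP [/eqP ->|h]; [by left | by right; apply: IH].
Qed.

Lemma In_enum (T : finType) (x : T) : List.In x (enum T).
Proof. by apply: In_of_in; rewrite mem_enum. Qed.

Lemma op_lin k n (B : 'M[R]_(k, n)) x y t :
  orth_proj B (x + t *: y) = orth_proj B x + t *: orth_proj B y.
Proof.
rewrite /orth_proj; apply/matrixP => i j; rewrite !mxE.
rewrite big_distrr -big_split /=; apply: eq_bigr => l _; rewrite !mxE; ring.
Qed.

Lemma cap0 k n (B : 'M[R]_(k, n)) : (<<B>> :&: kermx B^T)%MS = 0.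
Proof.
apply/eqP/rowV0P => v; rewrite sub_capmx genmxE => /andP [/submxP [u ->] /sub_kermxP hv].
have e : (u *m B) *m (u *m B)^T = 0.
  by rewrite trmx_mul mulmxA hv mul0mx.
move: (u *m B) e => w e {hv}.
apply/matrixP => i j; rewrite [RHS]mxE (ord1 i).
have := congr1 (fun M : 'M[R]_1 => M 0 0) e; rewrite [X in _ = X -> _]mxE mxE => hs.
have hnn : forall l, xpredT l -> 0 <= w 0 l * w^T l 0.
  by move=> l _; rewrite mxE -expr2 sqr_ge0.
have h0 := @psumr_eq0P _ _ xpredT (fun l => w 0 l * w^T l 0) hnn hs j isT.
move: h0; rewrite /= mxE; move/eqP; rewrite mulf_eq0 orbb; move/eqP.
done.
Qed.

Lemma op_ker k n (B : 'M[R]_(k, n)) y : B *m y = 0 -> orth_proj B y = 0.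
Proof.
move=> hy; rewrite /orth_proj proj_mx_0 ?trmx0 ?cap0 //.
by apply/sub_kermxP; rewrite -trmx_mul hy trmx0.
Qed.
End Main.
Arguments nf {R p}.
Section Main2.
Variable R : realType.
Variables n m k : nat.
Variables (AR : 'M[R]_(m, n)) (bR : 'cV[R]_m) (UR : 'M[R]_(k, n)) (wR : 'cV[R]_n).

Definition sysS : seq (Cn R) :=
  List.app (List.map (fun i => (nf (fun j => AR i j), 0)) (enum 'I_m))
  (List.app (List.map (fun r => (nf (fun j => UR r j), 0)) (enum 'I_k))
  (List.app (List.map (fun r => (nf (fun j => - UR r j), 0)) (enum 'I_k))
     [:: (nf (fun j => - wR j 0), -1)])).

Lemma rowdot p (M : 'M[R]_(p, n)) i (x : 'cV[R]_n) :
  dotn n (nf (fun j => M i j)) (nf (fun j => x j 0)) = (M *m x) i 0.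
Proof. by rewrite dotn_nf mxE. Qed.

Lemma inv_sem a d : incone n sysS a d -> exists s (z : 'I_k -> R) c,
  0 <= s /\ -s <= d /\
  forall x : 'cV[R]_n, lev (AR *m x) bR ->
    dotn n a (nf (fun j => x j 0)) <= c + \sum_r z r * (UR *m x) r 0 - s * dotv wR x.
Proof.
elim => {a d}.
- move=> a d /List.in_app_iff [| /List.in_app_iff [| /List.in_app_iff [|]]].
  + move/List.in_map_iff => [i [[<- <-] _]].
    exists 0, (fun _ => 0), (bR i 0); split; first done; split; first by rewrite oppr0.
    move=> x hx; rewrite rowdot big1 ?mul0r ?subr0 ?addr0; first exact: hx.
    by move=> r _; rewrite mul0r.
  + move/List.in_map_iff => [r [[<- <-] _]].
    exists 0, (fun r' => (r == r')%:R), 0; split; first done; split; first by rewrite oppr0.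
    by move=> x hx; rewrite rowdot sum_indG mul0r subr0 add0r.
  + move/List.in_map_iff => [r [[<- <-] _]].
    exists 0, (fun r' => - (r == r')%:R), 0; split; first done; split; first by rewrite oppr0.
    move=> x hx.
    have E : dotn n (nf (fun j => - UR r j)) (nf (fun j => x j 0)) = - (UR *m x) r 0.
      by rewrite dotn_nf mxE -sumrN; apply: eq_bigr => j _; rewrite mulNr.
    have E2 : \sum_r' (- (r == r')%:R) * (UR *m x) r' 0 = - (UR *m x) r 0.
      by rewrite -(@sum_indG _ _ (fun r' => (UR *m x) r' 0) r) -sumrN; apply: eq_bigr => j _; rewrite mulNr.
    by rewrite E E2 mul0r subr0 add0r.
  + move=> [[<- <-]|[]].
    exists 1, (fun _ => 0), 0; split; first done; split; first done.
    move=> x hx.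
    have E : dotn n (nf (fun j => - wR j 0)) (nf (fun j => x j 0)) = - dotv wR x.
      by rewrite dotn_nf /dotv -sumrN; apply: eq_bigr => j _; rewrite mulNr.
    by rewrite E big1 ?add0r ?mul1r ?sub0r // => r _; rewrite mul0r.
- move=> a1 d1 a2 d2 _ [s1 [z1 [c1 [hs1 [hd1 H1]]]]] _ [s2 [z2 [c2 [hs2 [hd2 H2]]]]].
  exists (s1 + s2), (fun r => z1 r + z2 r), (c1 + c2); split; first by rewrite addr_ge0.
  split; first lra.
  move=> x hx; rewrite dotnD.
  have -> : \sum_r (z1 r + z2 r) * (UR *m x) r 0 =
      \sum_r z1 r * (UR *m x) r 0 + \sum_r z2 r * (UR *m x) r 0.
    by rewrite -big_split /=; apply: eq_bigr => r _; rewrite mulrDl.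
  have := H1 x hx; have := H2 x hx; lra.
- move=> l a d hl _ [s [z [c [hs [hd H]]]]].
  exists (l * s), (fun r => l * z r), (l * c); split; first by rewrite mulr_ge0.
  split; first nra.
  move=> x hx; rewrite dotnZ.
  have -> : \sum_r (l * z r) * (UR *m x) r 0 = l * \sum_r z r * (UR *m x) r 0.
    by rewrite mulr_sumr; apply: eq_bigr => r _; rewrite mulrA.
  have := H x hx; nra.
- move=> a d e _ [s [z [c [hs [hd H]]]]] hde; exists s, z, c; split => //; split; first lra.
  exact: H.
- move=> a a' d _ [s [z [c [hs [hd H]]]]] he; exists s, z, c; split => //; split => //.
  move=> x hx.
  have <- : dotn n a (nf (fun j => x j 0)) = dotn n a' (nf (fun j => x j 0)).
    by apply: eq_bigr => i _; rewrite he.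
  exact: H.
Qed.
End Main2.
Arguments sysS {R n m k}.
Arguments inv_sem {R n m k AR bR UR wR a d}.

Theorem lemma5p1 (R : realType) (n m k : nat)
    (f : {mpoly rat[n]}) (A : 'M[rat]_(m, n)) (b : 'cV[rat]_m)
    (U : 'M[rat]_(k, n)) (w : 'cV[rat]_n) (q : {mpoly rat[k]}) :
  convex_poly R f ->
  (exists x : 'cV[R]_n, lev (ratmx R A *m x) (ratmx R b)) ->
  (* rows of U pairwise orthogonal; they span the subspace U := rowspan U *)
  (forall i j : 'I_k, i != j -> \sum_(l < n) U i l * U j l = 0) ->
  (* w lies in the orthogonal complement of the row space of U *)
  U *m w = 0 ->
  strongly_convex_quadratic R q ->
  (forall x : 'cV[R]_n,
      peval f x = peval f (orth_proj (ratmx R U) x) - dotv (ratmx R w) x) ->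
  (forall x : 'cV[R]_n,
      peval f (orth_proj (ratmx R U) x) >= peval q (ratmx R U *m x)) ->
  ((forall M : R, exists x : 'cV[R]_n,
        lev (ratmx R A *m x) (ratmx R b) /\ peval f x < M) <->
   (exists x0 : 'cV[R]_n,
        lev (ratmx R A *m x0) 0 /\ ratmx R U *m x0 = 0 /\ dotv (ratmx R w) x0 = 1)).
Proof.
move=> _ [xb hxb] _ _ hq hf hfq; split.
- move=> Hunb.
  case: (fm n (sysS (ratmx R A) (ratmx R U) (ratmx R w))) => [[xf Hx]|Hc].
  + set x1 : 'cV[R]_n := \col_j xf j.
    have hdot : forall (a : 'I_n -> R), dotn n (nf a) xf = \sum_j a j * x1 j 0.
      by move=> a; apply: eq_bigr => j _; rewrite nfE mxE.
    have hA : forall i, (ratmx R A *m x1) i 0 <= 0.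
      move=> i; have := Hx _ (List.in_or_app _ _ _ (or_introl
         (List.in_map (fun i => (nf (fun j => ratmx R A i j), 0)) _ i (In_enum _ i)))).
      by rewrite /= hdot mxE.
    have hU1 : forall r, (ratmx R U *m x1) r 0 <= 0.
      move=> r; have := Hx _ (List.in_or_app _ _ _ (or_intror (List.in_or_app _ _ _ (or_introl
         (List.in_map (fun r => (nf (fun j => ratmx R U r j), 0)) _ r (In_enum _ r)))))).
      by rewrite /= hdot mxE.
    have hU2 : forall r, - (ratmx R U *m x1) r 0 <= 0.
      move=> r; have := Hx _ (List.in_or_app _ _ _ (or_intror (List.in_or_app _ _ _ (or_intror
         (List.in_or_app _ _ _ (or_introl
         (List.in_map (fun r => (nf (fun j => - ratmx R U r j), 0)) _ r (In_enum _ r)))))))).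
      by rewrite /= hdot mxE -sumrN; under eq_bigr do rewrite mulNr.
    have hw : 1 <= dotv (ratmx R w) x1.
      have hin : List.In (nf (fun j => - ratmx R w j 0), -1)
         (sysS (ratmx R A) (ratmx R U) (ratmx R w)).
        by apply: List.in_or_app; right; apply: List.in_or_app; right;
           apply: List.in_or_app; right; left.
      have := Hx _ hin.
      rewrite /= hdot /dotv.
      under eq_bigr do rewrite mulNr.
      rewrite sumrN; lra.
    have hU : ratmx R U *m x1 = 0.
      apply/matrixP => r j; rewrite (ord1 j) [RHS]mxE.
      by apply/eqP; rewrite eq_le hU1 /= -oppr_le0 hU2.
    have hw0 : dotv (ratmx R w) x1 != 0 by rewrite gt_eqF // (lt_le_trans ltr01).
    exists ((dotv (ratmx R w) x1)^-1 *: x1); split; last split.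
    * move=> i; rewrite -scalemxAr.
      have := hA i; move: (ratmx R A *m x1) => P; rewrite !mxE => hP.
      have : 0 <= (dotv (ratmx R w) x1)^-1 by rewrite invr_ge0; lra.
      nra.
    * by rewrite -scalemxAr hU scaler0.
    * by rewrite dotvZ mulVf.
  + exfalso.
    have [s [z [c [hs [hd H]]]]] := inv_sem (bR := ratmx R b) Hc.
    have [C HC] := @quad_lb _ _ _ hq (\col_r (z r / s)).
    have [x [hx hfx]] := Hunb (C - c / s).
    have h1 := H x hx.
    have h0 : dotn n (fun _ => 0) (nf (fun j => x j 0)) = 0.
      by rewrite /dotn big1 // => i _; rewrite mul0r.
    rewrite h0 in h1.
    have h2 := HC (ratmx R U *m x).
    have h3 := hfq x.
    have h4 := hf x.
    have e : \sum_r (\col_r (z r / s)) r 0 * (ratmx R U *m x) r 0 =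
        (\sum_r z r * (ratmx R U *m x) r 0) / s.
      by rewrite mulr_suml; apply: eq_bigr => r _; rewrite mxE mulrAC.
    rewrite e in h2.
    have hs0 : s != 0 by rewrite gt_eqF //; lra.
    have hD : dotv (ratmx R w) x <= c / s + (\sum_r z r * (ratmx R U *m x) r 0) / s.
      rewrite -subr_ge0.
      have -> : c / s + (\sum_r z r * (ratmx R U *m x) r 0) / s - dotv (ratmx R w) x =
          (c + \sum_r z r * (ratmx R U *m x) r 0 - s * dotv (ratmx R w) x) / s.
        by field.
      by apply: divr_ge0; lra.
    lra.
- move=> [x0 [hA0 [hU0 hw0]]] M.
  set t := `|peval f xb - M| + 1.
  have ht : 0 <= t by rewrite /t; have := normr_ge0 (peval f xb - M); lra.
  exists (xb + t *: x0); split.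
    move=> i; have := hA0 i; have := hxb i; rewrite mulmxDr -scalemxAr.
    move: (ratmx R A *m xb) (ratmx R A *m x0) => P Q; rewrite !mxE.
    nra.
  rewrite hf op_lin (@op_ker _ _ _ _ x0 hU0) scaler0 addr0 dotvDZ hw0 mulr1.
  have := hf xb; have := ler_norm (peval f xb - M); rewrite /t; lra.
Qed.
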